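(* Let $Y\subseteq\hat I_\tau$ be nonempty and suppose $p\nmid a_Y$. Then there is a rational interior point $\vartheta$ of $F_Y$ such that $p\nmid m$, where $m$ is the minimal positive multiple of $r$ with $\frac mr\vartheta\in X_*(T_{\mathrm{ad}})^\tau$.
   Context: $p$ is a prime (the characteristic of an algebraically closed field $\mathrm k$). $G$ is a connected simple algebraic group with maximal torus $T$, $T_{\mathrm{ad}}$ the image of $T$ in the adjoint group; $\tau$ a diagram automorphism of order $r$. $\hat I_\tau=I_\tau\sqcup\{o\}$ is the vertex set of the affine Dynkin diagram of the twisted loop group $G(\mathrm k((z)))^\tau$, $I_\tau$ the $\tau$-orbits of vertices of the diagram of $G$; $(a_i)_{i\in\hat I_\tau}$ the Kac labels ($a_o=1$); $X_*(T_{\mathrm{ad}})^\tau=\bigoplus_{i\in I_\tau}\mathbb Z\check\omega_i$, $\check\omega_o:=0$. The fundamental alcove in $X_*(T)^\tau_{\mathbb R}$ is the simplex with vertices $\check\omega_i/a_i$, $i\in\hat I_\tau$; $F_Y$ is its facet spanned by $\{\check\omega_i/a_i:i\in Y\}$; $a_Y=r\cdot\gcd\{a_i:i\in Y\}$. *)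

(* Defs.v *)
From HB Require Import structures.
From mathcomp Require Import all_boot all_order all_algebra.
Set Implicit Arguments. Unset Strict Implicit. Unset Printing Implicit Defensive.
Import Order.TTheory GRing.Theory Num.Theory.
Local Open Scope ring_scope.

(* Vertex set \hat I_tau = T (a finType) with distinguished vertex o; I_tau = T \ {o}.
   Vectors of X_*(T)^tau_Q are represented by their coordinates in the basis
   (coweight i)_{i in I_tau} of X_*(T_ad)^tau; a vector is a function T -> rat whose
   o-coordinate is ignored (it is always 0 for the vectors built below). *)

Definition coweight (T : finType) (o i : T) : T -> rat :=
  fun j => if (i != o) && (j == i) then 1 else 0.

Definition in_coweight_lattice (T : finType) (o : T) (v : T -> rat) : Prop :=
  forall i, i != o -> v i \is a Num.int.

Definition alcove_vertex (T : finType) (o : T) (a : T -> nat) (i : T) : T -> rat :=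
  fun j => (a i)%:R^-1 * coweight o i j.

Definition facet_interior_point (T : finType) (o : T) (a : T -> nat)
    (Y : {set T}) (th : T -> rat) : Prop :=
  exists t : T -> rat,
    [/\ forall i, i \in Y -> 0 < t i,
        \sum_(i in Y) t i = 1
      & forall j, th j = \sum_(i in Y) t i * alcove_vertex o a i j].

Definition minimal_lattice_multiple (T : finType) (o : T) (r : nat)
    (th : T -> rat) (m : nat) : Prop :=
  [/\ (0 < m)%N, (r %| m)%N,
      in_coweight_lattice o (fun j => (m %/ r)%:R * th j)
    & forall m', (0 < m')%N -> (r %| m')%N ->
        in_coweight_lattice o (fun j => (m' %/ r)%:R * th j) -> (m <= m')%N].

Definition aY (T : finType) (r : nat) (a : T -> nat) (Y : {set T}) : nat :=
  (r * \big[gcdn/0%N]_(i in Y) a i)%N.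

(* Main.v *)
Require Import Defs.
From mathcomp Require Import all_boot all_order all_algebra.
From mathcomp Require Import ring.
Import Order.TTheory GRing.Theory Num.Theory.
Local Open Scope ring_scope.

Lemma th_val (T : finType) (o : T) (a : T -> nat) (Y : {set T}) (t : T -> rat) j :
  j != o -> \sum_(i in Y) t i * alcove_vertex o a i j =
            if j \in Y then t j / (a j)%:R else 0.
Proof.
move=> jo; rewrite big_mkcond (bigD1 j) //= big1 ?addr0.
  by rewrite /alcove_vertex /coweight eqxx jo /= mulr1; case: ifP.
move=> i ij; rewrite /alcove_vertex /coweight (eq_sym j i) (negbTE ij) andbF mulr0 mulr0.
by case: ifP.
Qed.

Theorem lemma2p6 (p : nat) (T : finType) (o : T) (a : T -> nat) (r : nat)
    (Y : {set T}) :
  prime p -> (0 < r)%N -> (forall i, (0 < a i)%N) -> a o = 1%N ->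
  Y != set0 -> ~~ (p %| aY r a Y)%N ->
  exists th : T -> rat,
    facet_interior_point o a Y th /\
    exists m : nat, minimal_lattice_multiple o r th m /\ ~~ (p %| m)%N.
Proof.
move=> pp r0 a0 ao Y0 pnd.
have pr : ~~ (p %| r)%N.
  by apply: contra pnd => h; rewrite /aY dvdn_mulr.
have /existsP [i0 /andP [i0Y pi0]] : [exists i, (i \in Y) && ~~ (p %| a i)%N].
  case: (boolP [exists i, (i \in Y) && ~~ (p %| a i)%N]) => // /existsPn H.
  exfalso; move/negP: pnd; apply.
  rewrite /aY dvdn_mull //; apply/dvdn_biggcdP => i iY.
  by have := H i; rewrite iY /= negbK.
set S' := (\sum_(i in Y | i != i0) a i)%N.
set M := (p * S' + 1)%N.
have M0 : (0 < M)%N by rewrite /M addn1.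
have SM : (S' < M)%N.
  by rewrite /M addn1 ltnS -{1}(mul1n S') leq_mul2r prime_gt0 ?orbT.
have pM : ~~ (p %| M)%N.
  by rewrite /M dvdn_addr ?dvdn_mulr // dvdn1; case: (p) pp => [|[|]].
pose x (j : T) : rat := if j == i0 then (M%:R - S'%:R) / (M%:R * (a i0)%:R)
                        else M%:R^-1.
pose t (j : T) : rat := (a j)%:R * x j.
pose th (j : T) : rat := \sum_(i in Y) t i * alcove_vertex o a i j.
have Mr0 : (M%:R : rat) != 0 by rewrite pnatr_eq0 -lt0n.
have ar0 : forall i, ((a i)%:R : rat) != 0 by move=> i; rewrite pnatr_eq0 -lt0n.
have thv : forall j, j != o -> th j = if j \in Y then x j else 0.
  move=> j jo; rewrite /th th_val //; case: ifP => // _.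
  by rewrite /t mulrC mulrA mulVf // mul1r.
exists th; split.
  exists t; split => //.
    move=> i iY; rewrite /t mulr_gt0 ?ltr0n // /x; case: ifP => _.
      by rewrite divr_gt0 ?subr_gt0 ?ltr_nat // mulr_gt0 ?ltr0n.
    by rewrite invr_gt0 ltr0n.
  rewrite (bigD1 i0) //=.
  have -> : \sum_(i in Y | i != i0) t i = S'%:R / M%:R.
    rewrite /S' natr_sum mulr_suml; apply: eq_bigr => i /andP [_ ii0].
    by rewrite /t /x (negbTE ii0).
  rewrite /t /x eqxx; field.
  by rewrite Mr0 ar0.
pose Lat (m : nat) := [forall j, (j != o) ==> ((m %/ r)%:R * th j \is a Num.int)].
have LatE : forall m, Lat m -> in_coweight_lattice o (fun j => (m %/ r)%:R * th j).
  by move=> m /forallP H j jo; have := H j; rewrite jo.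
have LatI : forall m, in_coweight_lattice o (fun j => (m %/ r)%:R * th j) -> Lat m.
  by move=> m H; apply/forallP => j; apply/implyP => jo; exact: H.
pose D := (M * a i0)%N.
have LD : Lat (r * D)%N.
  apply/forallP => j; apply/implyP => jo; rewrite mulKn // thv //.
  case: ifP => _; last by rewrite mulr0 rpred0.
  rewrite /x /D natrM; case: ifP => _.
    by rewrite mulrC divfK ?mulf_neq0 // rpredB ?natr_int.
  by rewrite mulrAC mulfV ?mul1r ?natr_int.
pose P (m : nat) := [&& (0 < m)%N, (r %| m)%N & Lat m].
have exP : exists m, P m.
  exists (r * D)%N; rewrite /P LD dvdn_mulr // andbT muln_gt0 r0 /D muln_gt0 M0 a0.
  by [].
case: (ex_minnP exP) => m /and3P [m0 rm Lm] minm.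
set k := (m %/ r)%N.
have mk : m = (k * r)%N by rewrite divnK.
have k0 : (0 < k)%N by move: m0; rewrite mk muln_gt0 => /andP [].
have kD : (k %| D)%N.
  rewrite /dvdn; apply/eqP; apply/eqP; rewrite eqn0Ngt; apply/negP => s0.
  set s := (D %% k)%N in s0.
  have Ls : Lat (r * s)%N.
    apply/forallP => j; apply/implyP => jo; rewrite mulKn //.
    have -> : (s%:R : rat) = D%:R - (D %/ k)%:R * k%:R.
      by rewrite {1}(divn_eq D k) natrD natrM addrC addKr.
    rewrite mulrBl -mulrA rpredB //.
      by move/forallP: LD => /(_ j); rewrite jo mulKn.
    by rewrite rpredM ?natr_int //; move/forallP: Lm => /(_ j); rewrite jo.
  have : (m <= r * s)%N by apply: minm; rewrite /P Ls dvdn_mulr // muln_gt0 r0 s0.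
  by rewrite mk mulnC leq_pmul2l // leqNgt ltn_pmod.
exists m; split; last first.
  rewrite mk Euclid_dvdM // negb_or pr andbT.
  apply/negP => pk; have := dvdn_trans pk kD.
  by rewrite /D Euclid_dvdM // (negbTE pM) (negbTE pi0).
split => //; first exact: LatE.
move=> m' m'0 rm' Lm'; apply: minm; rewrite /P m'0 rm' /=; exact: LatI.
Qed.
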